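(* Let $T$ be a finite rooted unweighted tree with root $r_T$, height $h_T$ and $L_T$ leaves, and consider the Hydra game on $T$ played by the algorithm $\mathrm{HERC}$. At any time during the game, define $$\Phi = 4\, h_T\, H(\mathrm{rank}(r_T)) + \sum_{w \in T} \eta(w)\,\mathrm{level}(w).$$ Then at any time, $\Phi = O(h_T \cdot (1+\log L_T))$, i.e., there is an absolute constant $C$ such that $\Phi \le C\, h_T (1+\log L_T)$ for every such tree and at every time of the game.
   Context: Hydra game: it is played on a fixed finite rooted unweighted tree $T$ known in advance. Each node is asleep, alive, or dead. Initially the root $r_T$ is alive and all other nodes are asleep. In each step the adversary picks an alive node $w$, makes it dead, and makes all its children alive (so at all times all ancestors of alive nodes are dead and all descendants of alive nodes are asleep). The game ends when all nodes except one are dead. The algorithm must always be at an alive node; if its node is killed, it moves to an alive node $w'$ paying the tree distance $\mathrm{dist}(w,w')$ (length of the shortest path in $T$). $\mathrm{rank}(u)$ is the number of non-dead (alive or asleep) leaves in the subtree rooted at $u$; $\mathrm{level}(u)$ is the height of the subtree rooted at $u$ (leaves have level $0$, so $h_T=\mathrm{level}(r_T)$). $H(n)=\sum_{i=1}^n 1/i$ is the $n$-th harmonic number. Algorithm $\mathrm{HERC}$ maintains a probability distribution $\eta$ on nodes with $\eta(u)=\mathrm{rank}(u)/\mathrm{rank}(r_T)$ if $u$ is alive and $\eta(u)=0$ otherwise (so initially $\eta$ is $1$ at the root). *)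

(* Defs.v *)
From mathcomp Require Import all_boot.
From Stdlib Require Import Reals.

Set Implicit Arguments.
Unset Strict Implicit.
Unset Printing Implicit Defensive.

Section Hydra.
Variables (V : finType) (r : V) (par : V -> V).

(* A finite rooted tree on the node type V, with root r and parent map par
   (par r = r by convention): every node reaches the root by going up. *)
Definition is_rooted_tree : Prop :=
  par r = r /\ forall v : V, exists k : nat, iter k par v = r.

Definition child (u v : V) : bool := (v != r) && (par v == u).

Definition is_leaf (u : V) : bool := ~~ [exists v, child u v].

Definition anc (u v : V) : bool := [exists k : 'I_#|V|, iter k par v == u].

Definition depth (v : V) : nat := find (fun k => iter k par v == r) (iota 0 #|V|).

(* level(u) = height of the subtree rooted at u (leaves have level 0) *)
Definition level (u : V) : nat := \max_(v | anc u v) (depth v - depth u).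

Definition height : nat := level r.

Definition nleaves : nat := #|[set v | is_leaf v]|.

(* Game state: the set D of dead nodes.  A node is alive iff it is not
   dead and it is the root or its parent is dead; otherwise non-dead nodes
   are asleep. *)
Definition alive (D : {set V}) (u : V) : bool :=
  (u \notin D) && ((u == r) || (par u \in D)).

(* States reachable during the game: initially nothing is dead (root alive,
   others asleep); a step kills an alive node w (its children thereby become
   alive); the game ends when all nodes except one are dead. *)
Inductive reachable : {set V} -> Prop :=
| reach_init : reachable set0
| reach_step (D : {set V}) (w : V) :
    reachable D -> alive D w -> 2 <= #|~: D| -> reachable (w |: D).

Definition rank (D : {set V}) (u : V) : nat :=
  #|[set v | is_leaf v && anc u v && (v \notin D)]|.

Definition eta (D : {set V}) (u : V) : R :=
  if alive D u then (INR (rank D u) / INR (rank D r))%R else 0%R.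

End Hydra.

Definition harmonic (n : nat) : R := \big[Rplus/0%R]_(i < n) (/ INR i.+1)%R.

Definition Phi (V : finType) (r : V) (par : V -> V) (D : {set V}) : R :=
  (4 * INR (height r par) * harmonic (rank r par D r)
   + \big[Rplus/0%R]_(w : V) (eta r par D w * INR (level r par w)))%R.

(* Main.v *)
Require Import Defs.
From mathcomp Require Import all_boot.
From Stdlib Require Import Reals.
From Stdlib Require Import Lra Psatz.
From mathcomp Require Import all_boot.
Delimit Scope R_scope with R.
Set Implicit Arguments.
Unset Strict Implicit.
From HB Require Import structures.
Lemma Rplus_assoc' : associative Rplus.
Proof. by move=> x y z; rewrite Rplus_assoc. Qed.
HB.instance Definition _ := Monoid.isComLaw.Build R 0%R Rplus Rplus_assoc' Rplus_comm Rplus_0_l.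

Lemma iter_root (V : finType) (r : V) (par : V -> V) :
  par r = r -> forall j, iter j par r = r.
Proof. by move=> Hr; elim=> //= j ->. Qed.

Lemma anc_root (V : finType) (r : V) (par : V -> V) :
  is_rooted_tree r par -> forall v, anc par r v.
Proof.
move=> [Hr Ht] v; have [k Hk] := Ht v.
have H := fconnect_iter par k v; rewrite Hk in H.
apply/existsP; exists (Ordinal (leq_trans (findex_max H) (max_card _))).
exact/eqP/(iter_findex H).
Qed.

Lemma reach_closed (V : finType) (r : V) (par : V -> V) :
  par r = r -> forall D, reachable r par D -> forall x, x \in D -> par x \in D.
Proof.
move=> Hr D; elim=> [|D' w _ IH Hal _] x; first by rewrite inE.
rewrite !inE => /orP [/eqP -> | Hx]; last by rewrite IH ?orbT.
move: Hal; rewrite /alive => /andP [_ /orP [/eqP -> | H]].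
  by rewrite Hr eqxx.
by rewrite H orbT.
Qed.

Lemma reach_closed_iter (V : finType) (r : V) (par : V -> V) :
  par r = r -> forall D, reachable r par D -> forall j x, x \in D -> iter j par x \in D.
Proof.
move=> Hr D HD; elim=> // j IH x Hx; rewrite iterS; exact: (reach_closed Hr HD (IH x Hx)).
Qed.

Lemma alive_disj (V : finType) (r : V) (par : V -> V) :
  par r = r -> forall D, reachable r par D ->
  forall u w v, alive r par D u -> alive r par D w -> anc par u v -> anc par w v -> u = w.
Proof.
move=> Hr D HD.
suff H : forall u w v a b, alive r par D u -> alive r par D w ->
   iter a par v = u -> iter b par v = w -> a <= b -> u = w.
  move=> u w v Hu Hw /existsP [a /eqP Ha] /existsP [b /eqP Hb].
  case: (leqP a b) => Hab; first exact: (H u w v a b).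
  symmetry; apply: (H w u v b a) => //; exact: ltnW.
move=> u w v a b Hu Hw Ha Hb Hab.
have E : w = iter (b - a) par u by rewrite -Ha -iterD subnK.
move: E; case E2: (b - a) => [|j]; first by move=> ->.
rewrite iterSr => Ew.
move: Hu; rewrite /alive => /andP [_ /orP [/eqP Eu | Hp]].
  by rewrite Ew Eu /= Hr iter_root.
move: Hw; rewrite /alive Ew (reach_closed_iter Hr HD j Hp) //.
Qed.

Lemma cardS (V : finType) (P : pred V) : #|[set v | P v]| = \sum_(v : V) (P v : nat).
Proof.
rewrite cardsE -sum1_card big_mkcond /=.
by apply: eq_bigr => v _; rewrite unfold_in; case: (P v).
Qed.

Lemma sum_alive_rank (V : finType) (r : V) (par : V -> V) :
  is_rooted_tree r par -> forall D, reachable r par D ->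
  \sum_(w : V) (if alive r par D w then rank r par D w else 0) <= rank r par D r.
Proof.
move=> Ht D HD.
have Hr := Ht.1.
rewrite (eq_bigr (fun w => \sum_(v:V) ((alive r par D w && (is_leaf r par v && anc par w v && (v \notin D))) : nat))); last first.
  by move=> w _; rewrite /rank cardS; case: (alive r par D w) => //=; rewrite big1.
rewrite /rank cardS exchange_big /=; apply: leq_sum => v _.
rewrite (anc_root Ht) andbT.
case: (boolP (is_leaf r par v && (v \notin D))) => Hv.
  rewrite /=.
  apply: leq_trans (_ : #|[pred w | alive r par D w && anc par w v]| <= 1).
    rewrite -sum1_card leq_eqVlt; apply/orP; left; rewrite eq_sym big_mkcond /=.
    apply/eqP; apply: eq_bigr => w _ /=; rewrite unfold_in /=; case: (alive r par D w) => //=.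
    by case/andP: Hv => -> ->; rewrite andbT; case: (anc par w v).
  apply/card_le1_eqP => x y; rewrite !inE => /andP [Ax Bx] /andP [Ay By].
  by have := alive_disj Hr HD Ax Ay Bx By => ->.
rewrite /= leqn0; apply/eqP; apply: big1 => w _.
case: (alive r par D w) => //=.
move: Hv; case: (is_leaf r par v); case: (v \in D); case: (anc par w v) => //.
Qed.

Lemma big_Rle (V : finType) (F G : V -> R) :
  (forall i, (F i <= G i)%R) ->
  (\big[Rplus/0%R]_(i : V) F i <= \big[Rplus/0%R]_(i : V) G i)%R.
Proof.
move=> H; apply: (big_ind2 (fun x y => (x <= y)%R)) => //.
- exact: Rle_refl.
- move=> ? ? ? ? ? ?; exact: Rplus_le_compat.
Qed.

Lemma big_Rmulr (V : finType) (F : V -> R) (c : R) :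
  \big[Rplus/0%R]_(i : V) (F i * c)%R = (\big[Rplus/0%R]_(i : V) F i * c)%R.
Proof.
symmetry; apply: (big_morph (fun x => x * c)%R (id1 := 0%R) (op1 := Rplus)).
- move=> x y /=; ring.
- ring.
Qed.

Lemma INR_sum (V : finType) (F : V -> nat) :
  INR (\sum_(i : V) F i) = \big[Rplus/0%R]_(i : V) INR (F i).
Proof.
apply: (big_morph INR (id1 := 0%R) (op1 := Rplus)).
- move=> x y; exact: plus_INR.
- done.
Qed.

Lemma harm_S (n : nat) : harmonic n.+1 = (harmonic n + / INR n.+1)%R.
Proof. by rewrite /harmonic big_ord_recr. Qed.

Lemma harm_mono (n m : nat) : n <= m -> (harmonic n <= harmonic m)%R.
Proof.
move=> /subnK <-; elim: (m - n) => [|k IH]; first by rewrite add0n; lra.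
rewrite addSn harm_S.
have : (0 < / INR (k + n).+1)%R by apply: Rinv_0_lt_compat; apply: lt_0_INR; apply/ltP.
lra.
Qed.

Lemma ln_step (n : nat) : 0 < n -> (/ INR n.+1 <= ln (INR n.+1) - ln (INR n))%R.
Proof.
move=> Hn.
have Hn0 : (0 < INR n)%R by apply: lt_0_INR; apply/ltP.
have Hn1 : (0 < INR n.+1)%R by apply: lt_0_INR; apply/ltP.
set y := (/ INR n.+1)%R.
have E1 : (1 - y = INR n / INR n.+1)%R.
  rewrite /y S_INR; field; lra.
have Hpos : (0 < INR n / INR n.+1)%R by apply: Rdiv_lt_0_compat.
have H1 := exp_ineq1_le (- y).
have H2 : (ln (1 - y) <= - y)%R.
  rewrite -(ln_exp (- y)).
  case: (Rle_lt_or_eq_dec _ _ H1) => H; last by rewrite -H; right; f_equal; lra.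
  left; apply: ln_increasing; lra.
rewrite E1 /Rdiv ln_mult ?ln_Rinv in H2; try lra; by apply: Rinv_0_lt_compat.
Qed.

Lemma harm_ln (n : nat) : 0 < n -> (harmonic n <= 1 + ln (INR n))%R.
Proof.
case: n => // n _; elim: n => [|n IH].
  rewrite harm_S /harmonic big_ord0 /= ln_1; lra.
rewrite harm_S; have := ln_step (n := n.+1) isT; lra.
Qed.

Lemma ln_nat_ge0 (n : nat) : (0 <= ln (INR n))%R.
Proof.
case: n => [|n].
  rewrite /ln; case: Rlt_dec => [H|_]; [by case: (Rlt_irrefl _ H) | lra].
rewrite -ln_1; have H : (1 <= INR n.+1)%R.
  rewrite S_INR; have := pos_INR n; lra.
case: (Rle_lt_or_eq_dec _ _ H) => H'; last by rewrite H'; right.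
left; apply: ln_increasing; lra.
Qed.

Lemma depth_root (V : finType) (r : V) (par : V -> V) : depth r par r = 0.
Proof.
rewrite /depth; have : 0 < #|V| by apply/card_gt0P; exists r.
by case: #|V| => // n _ /=; rewrite eqxx.
Qed.

Lemma level_le_height (V : finType) (r : V) (par : V -> V) :
  is_rooted_tree r par -> forall w, level r par w <= height r par.
Proof.
move=> Ht w; apply/bigmax_leqP => v _.
apply: leq_trans (leq_subr _ _) _.
have := leq_bigmax_cond (F := fun v => depth r par v - depth r par r) (P := anc par r) v (anc_root Ht v).
move=> H; apply: leq_trans H; by rewrite depth_root subn0.
Qed.

Theorem lemma2 :
  exists C : R,
    forall (V : finType) (r : V) (par : V -> V),
      is_rooted_tree r par ->
      forall D : {set V}, reachable r par D ->
        (Phi r par D <= C * INR (height r par) * (1 + ln (INR (nleaves r par))))%R.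
Proof.
exists 5%R => V r par Ht D HD.
set h := INR (height r par).
set L := nleaves r par.
set rk := rank r par D r.
have Hh : (0 <= h)%R by apply: pos_INR.
have HlnL := ln_nat_ge0 L.
have Hrk : rk <= L.
  rewrite /rk /rank /L /nleaves; apply: subset_leq_card; apply/subsetP => v.
  by rewrite !inE => /andP [/andP [-> _] _].
have HH : (harmonic rk <= 1 + ln (INR L))%R.
  case: (posnP rk) => [->|Hp].
    rewrite /harmonic big_ord0; lra.
  apply: Rle_trans (harm_mono Hrk) (harm_ln (leq_trans Hp Hrk)).
have HS : (\big[Rplus/0%R]_(w : V) (Defs.eta r par D w * INR (level r par w)) <= h)%R.
  pose a w := if alive r par D w then rank r par D w else 0.
  have Hinv : (0 <= / INR rk)%R.
    case: (posnP rk) => [->|Hp]; first by rewrite Rinv_0; lra.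
    by left; apply: Rinv_0_lt_compat; apply: lt_0_INR; apply/ltP.
  apply: Rle_trans (_ : (\big[Rplus/0%R]_(w : V) (INR (a w) * (/ INR rk * h)) <= h)%R).
    apply: big_Rle => w; rewrite /Defs.eta /a.
    case: (alive r par D w); last by change (INR 0) with 0%R; rewrite !Rmult_0_l; exact: Rle_refl.
    rewrite /Rdiv -/rk Rmult_assoc.
    apply: Rmult_le_compat_l; first exact: pos_INR.
    apply: Rmult_le_compat_l => //.
    apply: le_INR; apply/leP; exact: level_le_height.
  rewrite big_Rmulr -INR_sum.
  have Hs := sum_alive_rank Ht HD; rewrite -/rk in Hs.
  have Hs' : (INR (\sum_w a w) <= INR rk)%R by apply: le_INR; apply/leP.
  case: (posnP rk) => [E|Hp].
    rewrite E /= Rinv_0; lra.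
  have Hr0 : (0 < INR rk)%R by apply: lt_0_INR; apply/ltP.
  have : (INR (\sum_w a w) * / INR rk <= 1)%R.
    apply: (Rmult_le_reg_r (INR rk)) => //.
    rewrite Rmult_assoc Rinv_l; lra.
  have := pos_INR (\sum_w a w); nra.
rewrite /Phi -/h -/rk -/L.
have : (0 <= harmonic rk)%R by apply: Rle_trans (harm_mono (leq0n rk)); rewrite /harmonic big_ord0; lra.
nra.
Qed.
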